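(* For every integer $n\ge 0$, the number of Retakh Dyck paths of semilength $n$ (equivalently, the number of Retakh plane trees with $n+1$ nodes) equals the Motzkin number $M_n$. Equivalently, if $T(z)=\sum_{\tau}z^{|\tau|}$ is the generating function of Retakh plane trees by number of nodes $|\tau|$, then $T(z)=zM(z)$, where $M(z)=\sum_{n\ge0}M_nz^n=\frac{1-z-\sqrt{1-2z-3z^2}}{2z^2}$ is the unique power series solution of $M=1+zM+z^2M^2$. Moreover, let $F(z)$ be the generating function, by number of nodes, of plane trees with at least two nodes in which every leaf lies at odd depth, and let $G(z)$ be the generating function, by number of nodes, of plane trees in which every leaf lies at even depth (the one-node tree is included, its root being a leaf at depth $0$). Then $F=\frac{zG}{1-G}$, $G=\frac{z}{1-F}$, and $F(z)=z^2M(z)$.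
   Context: A Dyck path of semilength $n$ is a lattice path from $(0,0)$ to $(2n,0)$ with up-steps $(1,1)$ and down-steps $(1,-1)$ that never goes below the $x$-axis. A peak is an up-step immediately followed by a down-step; its level is the height of the point between them. A Retakh Dyck path is a Dyck path all of whose peaks are at level $1$ or at an even level. Under the standard bijection between Dyck paths of semilength $n$ and plane (ordered rooted) trees with $n+1$ nodes, the peaks correspond to the non-root leaves and the level of a peak equals the depth of the leaf (the root has depth $0$). A Retakh plane tree is a plane tree in which every non-root leaf has depth $1$ or even depth; the one-node tree is included, corresponding to the empty path. $M_n$ denotes the $n$-th Motzkin number. *)

(* Defs.v *)
From mathcomp Require Import all_boot.
From Stdlib Require List.
Set Implicit Arguments. Unset Strict Implicit. Unset Printing Implicit Defensive.

(* ---------- Motzkin numbers: M_0 = 1, M_{n+1} = M_n + sum_{i+j=n-1} M_i M_j,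
   i.e. the coefficients of the unique power series with M = 1 + zM + z^2 M^2. *)
Fixpoint motzkin_list (n : nat) : seq nat :=
  (* returns [:: M_n; M_{n-1}; ...; M_0] *)
  match n with
  | 0 => [:: 1]
  | m.+1 =>
      let l := motzkin_list m in
      let Mi := fun i => nth 0 (rev l) i in
      (head 0 l + (if m is k.+1 then \sum_(i < k.+1) Mi i * Mi (k - i) else 0)) :: l
  end.
Definition motzkin (n : nat) : nat := head 0 (motzkin_list n).

(* ---------- Dyck paths: true = up-step (1,1), false = down-step (1,-1). *)
Fixpoint dyck_from (h : nat) (s : seq bool) : bool :=
  match s with
  | [::] => h == 0
  | true :: s' => dyck_from h.+1 s'
  | false :: s' => (0 < h) && dyck_from h.-1 s'
  end.
Definition dyck (s : seq bool) : bool := dyck_from 0 s.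

Fixpoint peaks_ok (p : nat -> bool) (h : nat) (s : seq bool) : bool :=
  match s with
  | [::] => true
  | true :: s' => (if s' is false :: _ then p h.+1 else true) && peaks_ok p h.+1 s'
  | false :: s' => peaks_ok p h.-1 s'
  end.

Definition retakh_level (d : nat) : bool := (d == 1) || ~~ odd d.

Definition retakh_path (s : seq bool) : bool := dyck s && peaks_ok retakh_level 0 s.

Definition num_retakh_paths (n : nat) : nat :=
  #|[pred t : (n.*2).-tuple bool | retakh_path t]|.

Inductive ptree : Type := Node : seq ptree -> ptree.

Fixpoint nodes (t : ptree) : nat :=
  let: Node ts := t in (sumn (map nodes ts)).+1.

Fixpoint leaves_ok (p : nat -> bool) (d : nat) (t : ptree) : bool :=
  match t with
  | Node [::] => p d
  | Node ts => all (leaves_ok p d.+1) ts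
  end.

(* Retakh plane tree: every non-root leaf has depth 1 or even depth.
   (The root is a leaf only in the one-node tree, at depth 0, which is even,
   so the one-node tree is included as required.) *)
Definition retakh_tree (t : ptree) : bool := leaves_ok retakh_level 0 t.

Definition F_tree (t : ptree) : bool := (2 <= nodes t) && leaves_ok odd 0 t.

Definition G_tree (t : ptree) : bool := leaves_ok (fun d => ~~ odd d) 0 t.

Definition count_trees (P : ptree -> bool) (n c : nat) : Prop :=
  exists s : seq ptree, List.NoDup s /\ (forall t, List.In t s <-> (nodes t = n /\ P t))
                         /\ length s = c.

(* Main.v *)
Require Import Defs.
From HB Require Import structures.
From mathcomp Require Import all_boot zify.
Set Implicit Arguments. Unset Strict Implicit. Unset Printing Implicit Defensive.

Section PtreeInd.
Variables (P : ptree -> Prop) (Q : seq ptree -> Prop).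
Hypotheses (Qnil : Q [::]) (Qcons : forall t ts, P t -> Q ts -> Q (t :: ts))
  (PNode : forall ts, Q ts -> P (Node ts)).
Fixpoint ptree_ind2 (t : ptree) : P t :=
  let: Node ts := t in PNode
    ((fix F (ts : seq ptree) : Q ts :=
       match ts with [::] => Qnil | t :: ts' => Qcons (ptree_ind2 t) (F ts') end) ts).
End PtreeInd.

Fixpoint p2g (t : ptree) : GenTree.tree unit :=
  let: Node ts := t in GenTree.Node 0 (map p2g ts).
Fixpoint g2p (g : GenTree.tree unit) : ptree :=
  match g with GenTree.Leaf _ => Node [::] | GenTree.Node _ gs => Node (map g2p gs) end.
Lemma p2gK : cancel p2g g2p.
Proof.
move=> t; apply: (@ptree_ind2 (fun t => g2p (p2g t) = t) (fun ts => map g2p (map p2g ts) = ts)) => //=.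
  by move=> ? ? -> ->.
by move=> ? ->.
Qed.
HB.instance Definition _ := Countable.copy ptree (can_type p2gK).

Lemma nodes_gt0 t : 0 < nodes t. Proof. by case: t. Qed.

Lemma NoDup_uniq (T : eqType) (s : seq T) : uniq s -> List.NoDup s.
Proof.
elim: s => [|x s IH] /=; first by constructor.
case/andP=> xs us; constructor; last exact: IH.
move=> H; move/negP: xs; apply; elim: s H {IH us} => //= y s IH [->|/IH]; rewrite inE ?eqxx //.
by move=> ->; rewrite orbT.
Qed.

Lemma In_mem (T : eqType) (s : seq T) x : List.In x s <-> x \in s.
Proof.
elim: s => [|y s IH] //=; rewrite inE; split.
  by case=> [->|/IH ->]; rewrite ?eqxx ?orbT.
by case/orP=> [/eqP->|/IH]; [left|right].
Qed.

Fixpoint forests_f (fuel : nat) (tr : nat -> seq ptree) (m : nat) : seq (seq ptree) :=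
  match m with
  | 0 => [:: [::]]
  | _ => match fuel with
         | 0 => [::]
         | fuel'.+1 => flatten [seq [seq t :: f | t <- tr k, f <- forests_f fuel' tr (m - k)]
                                | k <- iota 1 m]
         end
  end.

Lemma forests_S fuel tr m : forests_f fuel.+1 tr m.+1 =
  flatten [seq [seq t :: f | t <- tr k, f <- forests_f fuel tr (m.+1 - k)] | k <- iota 1 m.+1].
Proof. by []. Qed.

Lemma sumn_nodes0 x : (sumn (map nodes x) == 0) = (x == [::]).
Proof. case: x => //= t x; by rewrite addn_eq0 eqn0Ngt nodes_gt0. Qed.

Section Forests.
Variable tr : nat -> seq ptree.
Hypothesis trS : forall k t, t \in tr k -> nodes t = k.

Lemma forests_sound fuel m x : x \in forests_f fuel tr m ->
  all (fun t => t \in tr (nodes t)) x && (sumn (map nodes x) == m).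
Proof.
elim: fuel m x => [|fuel IH] [|m] x //; rewrite ?forests_S ?inE; try by move/eqP->.
move/flatten_mapP=> [k]; rewrite mem_iota => /andP[k1 km].
case/allpairsP=> [[t f] /= [tk /IH /andP[af /eqP sf] ->]] /=.
rewrite (trS tk) tk af sf /= addnC subnK //; by rewrite -ltnS.
Qed.

Lemma forests_complete fuel m x : m <= fuel ->
  all (fun t => t \in tr (nodes t)) x -> sumn (map nodes x) = m ->
  x \in forests_f fuel tr m.
Proof.
elim: fuel m x => [|fuel IH] [|m] x //; rewrite ?forests_S.
- by move=> _ _ /eqP; rewrite sumn_nodes0 => /eqP->; rewrite inE.
- by move=> _ _ /eqP; rewrite sumn_nodes0 => /eqP->; rewrite inE.
move=> mf; case: x => [|t x] // /andP[tt ax] sx; rewrite /= in sx.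
apply/flatten_mapP; exists (nodes t).
  by rewrite mem_iota nodes_gt0 add1n ltnS -sx leq_addr.
apply: allpairs_f => //; apply: IH => //.
  by have := nodes_gt0 t; lia.
by lia.
Qed.

Hypothesis trU : forall k, uniq (tr k).

Lemma uniq_flatten_disj (T S : eqType) (F : S -> seq T) (s : seq S) :
  uniq s -> (forall k, uniq (F k)) ->
  (forall k k' x, x \in F k -> x \in F k' -> k = k') ->
  uniq (flatten (map F s)).
Proof.
move=> us uF dF; elim: s us => //= k s IH /andP[ks us].
rewrite cat_uniq uF IH // andbT; apply/hasPn => x /flatten_mapP[k' k's xk'].
apply/negP => xk; move: ks; by rewrite (dF _ _ _ xk xk') k's.
Qed.

Lemma forests_uniq fuel m : uniq (forests_f fuel tr m).
Proof.
elim: fuel m => [|fuel IH] [|m] //; rewrite forests_S.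
apply: uniq_flatten_disj; first exact: iota_uniq.
- move=> k; apply: allpairs_uniq => //.
  by move=> [a b] [c d] _ _ /= [-> ->].
- move=> k k' x /allpairsP[[t f] /= [tk _ ->]] /allpairsP[[t' f'] /= [tk' _ [e _]]].
  by rewrite -(trS tk) -(trS tk') e.
Qed.
End Forests.

Lemma forests_ext fuel tr1 tr2 m : (forall k, 0 < k <= m -> tr1 k = tr2 k) ->
  forests_f fuel tr1 m = forests_f fuel tr2 m.
Proof.
elim: fuel m => [|fuel IH] [|m] // H; rewrite !forests_S; congr flatten; apply/eq_in_map => k.
rewrite mem_iota => /andP[k1 km]; rewrite H; last by lia.
rewrite (IH (m.+1 - k)) // => j /andP[j0 jm]; apply: H; lia.
Qed.

Lemma forests_fuel fuel1 fuel2 tr m : m <= fuel1 -> m <= fuel2 ->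
  forests_f fuel1 tr m = forests_f fuel2 tr m.
Proof.
elim: fuel1 fuel2 m => [|f1 IH] [|f2] [|m] // h1 h2; rewrite !forests_S; congr flatten; apply/eq_in_map => k.
rewrite mem_iota => /andP[k1 km]; rewrite (IH f2) //; lia.
Qed.

Fixpoint LT (p : nat -> bool) (fuel d n : nat) : seq ptree :=
  match fuel with
  | 0 => [::]
  | fuel'.+1 => match n with
     | 0 => [::]
     | 1 => if p d then [:: Node [::]] else [::]
     | n'.+1 => [seq Node f | f <- forests_f n' (LT p fuel' d.+1) n']
     end
  end.

Lemma LT_S2 p fuel d n : LT p fuel.+1 d n.+2 =
  [seq Node f | f <- forests_f n.+1 (LT p fuel d.+1) n.+1].
Proof. by []. Qed.

Lemma LT_S1 p fuel d : LT p fuel.+1 d 1 = if p d then [:: Node [::]] else [::].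
Proof. by []. Qed.

Lemma LT_sound p fuel d n t : t \in LT p fuel d n -> (nodes t == n) && leaves_ok p d t.
Proof.
elim: fuel d n t => [|fuel IH] d [|[|n]] t //; rewrite ?LT_S1 ?LT_S2.
  by case: ifP => // pd; rewrite inE => /eqP->; rewrite /= pd.
case/mapP=> x xf ->.
have trS : forall k c, c \in LT p fuel d.+1 k -> nodes c = k.
  by move=> k c /IH /andP[/eqP].
case/andP: (forests_sound trS xf) => ax /eqP sx.
rewrite /= sx eqxx /=; case: x ax sx {xf} => [|c x] //= /andP[cc ax] _.
rewrite (andP (IH _ _ _ cc)).2 /=; apply/allP => c' c'x.
by have /IH/andP[] := allP ax c' c'x.
Qed.

Lemma nodes_le_sum x c : c \in x -> nodes c <= sumn (map nodes x).
Proof.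
elim: x => //= c' x IH; rewrite inE => /orP[/eqP->|/IH]; first exact: leq_addr.
by move=> h; apply: leq_trans h (leq_addl _ _).
Qed.

Lemma LT_complete p fuel d n t : n <= fuel -> nodes t = n -> leaves_ok p d t ->
  t \in LT p fuel d n.
Proof.
elim: fuel d n t => [|fuel IH] d n t.
  by rewrite leqn0 => /eqP-> ; have := nodes_gt0 t; lia.
case: t => [[|c x]] nf nt.
  by move=> /= ->; rewrite -nt inE.
have [k ek] : exists k, nodes (Node (c :: x)) = k.+2.
  by exists (nodes c + sumn (map nodes x)).-1; rewrite /=; have := nodes_gt0 c; lia.
rewrite -nt ek LT_S2 => /allP al; apply: map_f.
have sk : sumn (map nodes (c :: x)) = k.+1 by move: ek => /= [].
have trS : forall k c, c \in LT p fuel d.+1 k -> nodes c = k.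
  by move=> k' c' /LT_sound /andP[/eqP].
apply: forests_complete => //.
apply/allP => c' c'x; apply: IH => //; last exact: al.
move: (nodes_le_sum c'x); rewrite sk; rewrite -nt ek in nf; lia.
Qed.

Lemma LT_uniq p fuel d n : uniq (LT p fuel d n).
Proof.
elim: fuel d n => [|fuel IH] d [|[|n]] //; rewrite ?LT_S1 ?LT_S2.
  by case: ifP.
rewrite map_inj_uniq; last by move=> ? ? [].
apply: forests_uniq => //.
by move=> k c /LT_sound /andP[/eqP].
Qed.

Lemma LT_fuel p fuel1 fuel2 d n : n <= fuel1 -> n <= fuel2 ->
  LT p fuel1 d n = LT p fuel2 d n.
Proof.
elim: fuel1 fuel2 d n => [|f1 IH] [|f2] d [|[|n]] // h1 h2.
rewrite !LT_S2; congr map; apply: forests_ext => k /andP[k0 kn].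
apply: IH; lia.
Qed.

Lemma LT_shift p fuel d n : LT p fuel d.+1 n = LT (fun x => p x.+1) fuel d n.
Proof.
elim: fuel d n => [|fuel IH] d [|[|n]] //; rewrite ?LT_S2 //.
congr map; apply: forests_ext => k _; exact: IH.
Qed.

Lemma LT_ext p q fuel d n : p =1 q -> LT p fuel d n = LT q fuel d n.
Proof.
move=> pq; elim: fuel d n => [|fuel IH] d [|[|n]] //; rewrite ?LT_S1 ?LT_S2 ?pq //.
congr map; apply: forests_ext => k _; exact: IH.
Qed.

Definition LTn p d n := LT p n d n.

Lemma LTn_mem p d n t : (t \in LTn p d n) = (nodes t == n) && leaves_ok p d t.
Proof.
apply/idP/idP; first exact: LT_sound.
by case/andP=> /eqP nt lt; apply: LT_complete.
Qed.

Definition conv (a b : nat -> nat) n := \sum_(k < n.+1) a k * b (n - k).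

Lemma convC a b n : conv a b n = conv b a n.
Proof.
rewrite /conv (reindex_inj rev_ord_inj) /=; apply: eq_bigr => k _.
rewrite mulnC subSS subKn //; by rewrite -ltnS.
Qed.

Lemma conv_ext a1 a2 b1 b2 n : (forall k, k <= n -> a1 k * b1 (n - k) = a2 k * b2 (n - k)) ->
  conv a1 b1 n = conv a2 b2 n.
Proof. move=> H; apply: eq_bigr => k _; apply: H; by rewrite -ltnS. Qed.

Lemma convDl a1 a2 b n : conv (fun k => a1 k + a2 k) b n = conv a1 b n + conv a2 b n.
Proof. by rewrite /conv -big_split; apply: eq_bigr => k _; rewrite mulnDl. Qed.

Lemma convDr a b1 b2 n : conv a (fun k => b1 k + b2 k) n = conv a b1 n + conv a b2 n.
Proof. by rewrite /conv -big_split; apply: eq_bigr => k _; rewrite mulnDr. Qed.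

Definition sh (a : nat -> nat) n := if n is m.+1 then a m else 0.

Lemma conv_shl a b n : conv (sh a) b n = sh (conv a b) n.
Proof.
rewrite /conv big_ord_recl /= mul0n add0n; case: n => [|n] /=; first by rewrite big_ord0.
by apply: eq_bigr => k _; rewrite subSS.
Qed.

Lemma conv_shr a b n : conv a (sh b) n = sh (conv a b) n.
Proof. by rewrite convC conv_shl; case: n => //= n; rewrite convC. Qed.

Definition e1 n := (n == 1 : nat).

Lemma conv_e1 a n : conv e1 a n = sh a n.
Proof.
rewrite /conv; case: n => [|n]; first by rewrite big_ord_recl big_ord0.
rewrite big_ord_recl /= mul0n add0n big_ord_recl /= mul1n subn1 /=.
rewrite big1 ?addn0 // => k _; by rewrite mul0n.
Qed.

Section FG.
Variables f g : nat -> nat.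
Hypothesis f0 : f 0 = 0.
Hypothesis F1 : forall n, f n = sh g n + conv f g n.
Hypothesis G1 : forall n, g n = e1 n + conv f g n.

Lemma GF n : g n + sh g n = f n + e1 n.
Proof. by rewrite F1 G1; lia. Qed.

Lemma Frec n : f n = sh e1 n + sh f n + conv f f n.
Proof.
have h1 : conv f f n + sh f n = conv f g n + sh (conv f g) n.
  rewrite -conv_e1 (convC e1) -convDr -conv_shr -convDr.
  by apply: conv_ext => k _; rewrite GF.
have h2 : f n = sh e1 n + conv f g n + sh (conv f g) n.
  rewrite F1; case: n {h1} => [|n] /=; first by rewrite /conv big_ord_recl big_ord0 f0.
  rewrite G1; lia.
lia.
Qed.
End FG.

Lemma size_mlist m : size (motzkin_list m) = m.+1.
Proof. by elim: m => //= m ->. Qed.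

Lemma mot_nth m i : i <= m -> nth 0 (rev (motzkin_list m)) i = motzkin i.
Proof.
elim: m i => [|m IH] i; first by rewrite leqn0 => /eqP->.
rewrite leq_eqVlt => /orP[/eqP->|lt].
  rewrite {1}/motzkin_list -/motzkin_list rev_cons nth_rcons size_rev size_mlist ltnn eqxx.
  by rewrite /motzkin.
rewrite {1}/motzkin_list -/motzkin_list rev_cons nth_rcons size_rev size_mlist lt; exact: IH.
Qed.

Lemma motzinS m : motzkin m.+1 = motzkin m + (if m is k.+1 then conv motzkin motzkin k else 0).
Proof.
rewrite {1}/motzkin /=; congr addn; case: m => // k; apply: eq_bigr => i _.
have := ltn_ord i; move=> ?; rewrite mot_nth; last lia. rewrite mot_nth //; lia.
Qed.

Definition z2M n := if n is m.+2 then motzkin m else 0.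

Lemma conv_z2M b n : conv z2M b n.+2 = conv motzkin b n.
Proof.
rewrite /conv big_ord_recl big_ord_recl /= !mul0n !add0n; apply: eq_bigr => k _.
by rewrite !subSS.
Qed.

Lemma conv0 a b : a 0 = 0 -> conv a b 0 = 0.
Proof. by move=> a0; rewrite /conv big_ord_recl big_ord0 a0. Qed.

Lemma conv1 a b : a 0 = 0 -> b 0 = 0 -> conv a b 1 = 0.
Proof. by move=> a0 b0; rewrite /conv big_ord_recl big_ord_recl big_ord0 a0 /= b0 muln0. Qed.

Lemma z2M_rec n : z2M n = sh e1 n + sh z2M n + conv z2M z2M n.
Proof.
case: n => [|[|[|n]]].
- by rewrite conv0.
- by rewrite conv1.
- by rewrite conv_z2M /conv big_ord_recl big_ord0.
rewrite conv_z2M convC /=; case: n => [|n].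
  by rewrite /conv big_ord_recl big_ord_recl big_ord0.
by rewrite conv_z2M motzinS.
Qed.

Lemma f_is_z2M f : f 0 = 0 -> (forall n, f n = sh e1 n + sh f n + conv f f n) ->
  forall n, f n = z2M n.
Proof.
move=> f0 fr n; elim: n {-2}n (leqnn n) => [|N IH] n.
  by rewrite leqn0 => /eqP->; rewrite f0.
rewrite leq_eqVlt => /orP[/eqP->|]; last by rewrite ltnS; apply: IH.
rewrite fr z2M_rec; congr addn; [congr addn|].
  by case: N IH => //= N IH; apply: IH.
apply: conv_ext => k kN; rewrite leq_eqVlt in kN; case/orP: kN => [/eqP->|kN].
  by rewrite subnn f0 !muln0.
case: k kN => [|k] kN; first by rewrite f0.
rewrite IH; last lia. rewrite IH //; lia.
Qed.

Lemma conv_uniq a c S1 S2 : a 0 = 0 ->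
  (forall n, S1 n = c n + conv a S1 n) -> (forall n, S2 n = c n + conv a S2 n) ->
  forall n, S1 n = S2 n.
Proof.
move=> a0 h1 h2 n; elim: n {-2}n (leqnn n) => [|N IH] n.
  by rewrite leqn0 => /eqP->; rewrite h1 h2 !conv0.
rewrite leq_eqVlt => /orP[/eqP->|]; last by rewrite ltnS; apply: IH.
rewrite h1 h2; congr addn; apply: conv_ext => k kN.
case: k kN => [|k] kN; first by rewrite a0.
by rewrite IH // leq_subLR; lia.
Qed.

Lemma motzkin_rec2 n : motzkin n = (n == 0) + conv (fun k => e1 k + z2M k) motzkin n.
Proof.
rewrite convDl conv_e1; case: n => [|[|n]].
- by rewrite conv0.
- by rewrite /conv big_ord_recl big_ord_recl big_ord0.
by rewrite conv_z2M motzinS /=.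
Qed.

Fixpoint FSn fuel (a : nat -> nat) m : nat :=
  match m with
  | 0 => 1
  | m'.+1 => match fuel with
             | 0 => 0
             | fuel'.+1 => \sum_(k < m'.+1) a k.+1 * FSn fuel' a (m' - k)
             end
  end.

Lemma sumn_iota (G : nat -> nat) m n : sumn (map G (iota m n)) = \sum_(k < n) G (m + k).
Proof.
elim: n m => [|n IH] m; first by rewrite big_ord0.
by rewrite /= IH big_ord_recl addn0; congr addn; apply: eq_bigr => k _; rewrite addSnnS.
Qed.

Lemma size_forests fuel tr m :
  size (forests_f fuel tr m) = FSn fuel (fun k => size (tr k)) m.
Proof.
elim: fuel m => [|fuel IH] [|m] //; rewrite forests_S size_flatten /shape -map_comp sumn_iota /=.
by apply: eq_bigr => k _; rewrite size_allpairs IH add1n subSS.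
Qed.

Lemma FSn_fuel f1 f2 a m : m <= f1 -> m <= f2 -> FSn f1 a m = FSn f2 a m.
Proof.
elim: f1 f2 m => [|f1 IH] [|f2] [|m] // h1 h2 /=.
by apply: eq_bigr => k _; rewrite (IH f2 (m - k)) //; lia.
Qed.

Lemma FSn_ext fuel a b m : (forall k, 0 < k <= m -> a k = b k) -> FSn fuel a m = FSn fuel b m.
Proof.
elim: fuel m => [|fuel IH] [|m] // H /=.
apply: eq_bigr => k _; rewrite H; last by have := ltn_ord k; lia.
congr muln; apply: IH => j hj; apply: H; lia.
Qed.

Definition FS a m := FSn m a m.

Lemma FS_rec a m : a 0 = 0 -> FS a m = (m == 0) + conv a (FS a) m.
Proof.
move=> a0; case: m => [|m]; first by rewrite /conv big_ord_recl big_ord0 a0.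
rewrite /FS /conv big_ord_recl a0 /= add0n; apply: eq_bigr => k _.
by rewrite subSS; congr muln; apply: FSn_fuel; lia.
Qed.

Lemma FS_ext a b m : (forall k, 0 < k <= m -> a k = b k) -> FS a m = FS b m.
Proof. exact: FSn_ext. Qed.

Definition sz p d n := size (LTn p d n).

Lemma sz0 p d : sz p d 0 = 0. Proof. by []. Qed.
Lemma sz1 p d : sz p d 1 = p d. Proof. by rewrite /sz /LTn LT_S1; case: (p d). Qed.
Lemma sz2 p d n : sz p d n.+2 = FS (sz p d.+1) n.+1.
Proof.
rewrite /sz /LTn LT_S2 size_map size_forests /FS; apply: FSn_ext => k hk.
by rewrite (@LT_fuel _ (n.+1) k) //; lia.
Qed.

Lemma sz_shift p d n : sz p d.+1 n = sz (fun x => p x.+1) d n.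
Proof. by rewrite /sz /LTn LT_shift. Qed.

Lemma sz_ext p q d n : p =1 q -> sz p d n = sz q d n.
Proof. by move=> pq; rewrite /sz /LTn (LT_ext _ _ _ pq). Qed.

Definition evenb (x : nat) := ~~ odd x.
Definition fs n := sz odd 0 n.
Definition gs n := sz evenb 0 n.
Definition rs n := sz retakh_level 0 n.

Lemma odd1 k : sz odd 1 k = gs k.
Proof. by rewrite sz_shift; apply: sz_ext => x; rewrite /evenb /=. Qed.
Lemma even1 k : sz evenb 1 k = fs k.
Proof. by rewrite sz_shift; apply: sz_ext => x; rewrite /evenb /= negbK. Qed.

Lemma fs0 : fs 0 = 0. Proof. by []. Qed.
Lemma gs0 : gs 0 = 0. Proof. by []. Qed.
Lemma fs1 : fs 1 = 0. Proof. by rewrite /fs sz1. Qed.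
Lemma gs1 : gs 1 = 1. Proof. by rewrite /gs sz1. Qed.
Lemma fs2 n : fs n.+2 = FS gs n.+1.
Proof. by rewrite /fs sz2; apply: FS_ext => k _; rewrite odd1. Qed.
Lemma gs2 n : gs n.+2 = FS fs n.+1.
Proof. by rewrite /gs sz2; apply: FS_ext => k _; rewrite even1. Qed.

Lemma FSf m : FS fs m = gs m.+1.
Proof. by case: m => [|m]; [rewrite gs1 | rewrite gs2]. Qed.
Lemma FSg m : FS gs m = fs m.+1 + (m == 0).
Proof. by case: m => [|m]; [rewrite fs1 | rewrite fs2 addn0]. Qed.

Lemma convS a b n : conv a b n.+1 = conv a (fun j => b j.+1) n + a n.+1 * b 0.
Proof.
rewrite /conv big_ord_recr subnn /=; congr addn; apply: eq_bigr => k _.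
by rewrite subSn // -ltnS.
Qed.

Lemma conv_delta a n : conv a (fun j => (j == 0 : nat)) n = a n.
rewrite convC /conv big_ord_recl /= subn0 mul1n big1 ?addn0 // => k _.


Qed.

Lemma G1 n : gs n = e1 n + conv fs gs n.
Proof.
case: n => [|m]; first by rewrite conv0.
rewrite -FSf FS_rec // convS gs0 muln0 addn0; rewrite /e1 eqSS; congr addn.
by apply: conv_ext => k _; rewrite FSf.
Qed.

Lemma F1 n : fs n = sh gs n + conv fs gs n.
Proof.
case: n => [|[|m]].
- by rewrite conv0.
- by rewrite fs1 conv1.
rewrite fs2 FS_rec ?gs0 // add0n (convC fs gs) (convS gs fs) fs0 muln0 addn0; change (sh gs m.+2) with (gs m.+1).
have -> : conv gs (FS gs) m.+1 = conv gs (fun j => fs j.+1) m.+1 + conv gs (fun j => (j == 0 : nat)) m.+1.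
  by rewrite -convDr; apply: conv_ext => k _; rewrite FSg.
by rewrite conv_delta addnC.
Qed.

Lemma fs_eq n : fs n = z2M n.
Proof. apply: f_is_z2M => //; exact: (Frec fs0 F1 G1). Qed.

Lemma retakh2 j : sz retakh_level 2 j = gs j.
Proof.
by rewrite sz_shift sz_shift; apply: sz_ext => x; rewrite /retakh_level /evenb /= negbK.
Qed.

Lemma h_eq k : sz retakh_level 1 k = e1 k + z2M k.
Proof.
case: k => [|[|k]]; [by rewrite sz0 | by rewrite sz1 |].
rewrite sz2 (FS_ext (b := gs)); last by move=> j _; rewrite retakh2.
by rewrite -fs2 fs_eq.
Qed.

Lemma rs_eq n : rs n.+1 = motzkin n.
Proof.
have -> : rs n.+1 = FS (sz retakh_level 1) n by case: n => [|n]; [rewrite /rs sz1 | rewrite /rs sz2].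
apply: (@conv_uniq (fun k => e1 k + z2M k) (fun n => (n == 0 : nat))) => //; last exact: motzkin_rec2.
move=> m; rewrite FS_rec ?sz0 //; congr addn; apply: conv_ext => k _; by rewrite h_eq.
Qed.

Lemma ptree_ind2s (P : ptree -> Prop) (Q : seq ptree -> Prop) :
  Q [::] -> (forall t ts, P t -> Q ts -> Q (t :: ts)) -> (forall ts, Q ts -> P (Node ts)) ->
  forall ts, Q ts.
Proof.
move=> Qn Qc PN ts; elim: ts => [|t ts IH] //; apply: (Qc) => //; exact: (ptree_ind2 Qn Qc PN).
Qed.

Fixpoint enc (t : ptree) : seq bool :=
  let: Node ts := t in
  (fix encf ts := match ts with [::] => [::] | c :: cs => true :: enc c ++ false :: encf cs end) ts.
Fixpoint encf (ts : seq ptree) : seq bool :=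
  match ts with [::] => [::] | c :: cs => true :: enc c ++ false :: encf cs end.
Lemma enc_Node ts : enc (Node ts) = encf ts.
Proof. by elim: ts => //= c cs ->. Qed.

Lemma encf_cons c cs v : encf (c :: cs) ++ v = true :: enc c ++ false :: (encf cs ++ v).
Proof. by rewrite /= -catA. Qed.

Lemma dyck_encf ts h v : dyck_from h (encf ts ++ v) = dyck_from h v.
Proof.
move: ts h v; apply: (@ptree_ind2s (fun t => forall h v, dyck_from h (enc t ++ v) = dyck_from h v)
   (fun ts => forall h v, dyck_from h (encf ts ++ v) = dyck_from h v)) => //.
by move=> c cs Pc Qcs h v; rewrite encf_cons /= Pc /= Qcs.
Qed.

Lemma peaks_tt p h w : peaks_ok p h (true :: true :: w) = peaks_ok p h.+1 (true :: w).
Proof. by []. Qed.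

Lemma peaks_encf p ts h v :
  peaks_ok p h (encf ts ++ v) = all (leaves_ok p h.+1) ts && peaks_ok p h v.
Proof.
move: ts h v; apply: (@ptree_ind2s
  (fun t => forall h v, peaks_ok p h (true :: enc t ++ false :: v) = leaves_ok p h.+1 t && peaks_ok p h v)
  (fun ts => forall h v, peaks_ok p h (encf ts ++ v) = all (leaves_ok p h.+1) ts && peaks_ok p h v)) => //.
- by move=> c cs Pc Qcs h v; rewrite encf_cons Pc Qcs andbA.
- move=> [|c cs] Q h v; first by [].
  rewrite enc_Node encf_cons peaks_tt -encf_cons Q; by [].
Qed.

Lemma size_encf ts : size (encf ts) = (sumn (map nodes ts)).*2.
Proof.
move: ts; apply: (@ptree_ind2s (fun t => size (enc t) = (nodes t).-1.*2)
   (fun ts => size (encf ts) = (sumn (map nodes ts)).*2)) => //.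
  move=> c cs Pc Qcs; rewrite /= size_cat /= Pc Qcs; have := nodes_gt0 c; lia.
Qed.

Lemma dyck_split k u1 u2 x y : dyck_from k u1 -> dyck_from k u2 ->
  u1 ++ false :: x = u2 ++ false :: y -> u1 = u2 /\ x = y.
Proof.
elim: u1 k u2 => [|b u1 IH] k [|b' u2] //=.
- by move=> /eqP-> _ [].
- by case: b' => /eqP-> //= _ [].
- by case: b => //= d1 /eqP k0 []; rewrite k0 in d1.
case: b; case: b' => //=.
- by move=> d1 d2 [] /(IH _ _ d1 d2) [-> ->].
- by move=> /andP[_ d1] /andP[_ d2] [] /(IH _ _ d1 d2) [-> ->].
Qed.

Lemma enc_dyck t : dyck_from 0 (enc t).
Proof. by case: t => ts; rewrite enc_Node; have := dyck_encf ts 0 [::]; rewrite cats0 => ->. Qed.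

Lemma encf_inj : injective encf.
Proof.
move=> ts; move: ts; apply: (@ptree_ind2s (fun t => forall t', enc t = enc t' -> t = t')
   (fun ts => forall ts', encf ts = encf ts' -> ts = ts')).
- by move=> [].
- move=> c cs Pc Qcs [|c' cs'] // [] e.
  have [e1 e2] := dyck_split (enc_dyck c) (enc_dyck c') e.
  by rewrite (Pc c') // (Qcs cs').
- by move=> ts Q [ts']; rewrite !enc_Node => /Q ->.
Qed.

Lemma dyck_cat k h u v : dyck_from k u -> dyck_from (k + h) (u ++ v) = dyck_from h v.
Proof.
elim: u k => [|b u IH] k /=; first by move/eqP->.
case: b => /=; first by move/IH; rewrite addSn.
by case: k => // k /IH; rewrite addSn.
Qed.

Lemma first_return n w h : size w <= n -> dyck_from h.+1 w ->
  exists u v, [/\ w = u ++ false :: v, dyck_from 0 u & dyck_from h v].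
Proof.
elim: n w h => [|n IH] [|b w] h //= sw.
case: b => /=; last by move=> d; exists [::], w.
move=> /IH [] // u1 [v1 [e1 d1 d2]].
have [] := IH v1 h _ d2; first by move: sw; rewrite e1 size_cat /=; lia.
move=> u2 [v2 [e2 d3 d4]].
exists (true :: u1 ++ false :: u2), v2; split => //.
  by rewrite e1 e2 /= -catA.
by rewrite /= -[1]add0n dyck_cat.
Qed.

Lemma dyck_surj n s : size s <= n -> dyck_from 0 s -> exists ts, s = encf ts.
Proof.
elim: n s => [|n IH] [|[] s] //= ss; try by exists [::].
move/(first_return (leqnn _)) => [u [v [es du dv]]].
rewrite es size_cat /= in ss; rewrite es.
have [cu ->] := IH u ltac:(lia) du.
have [cv ->] := IH v ltac:(lia) dv.
exists (Node cu :: cv); change (encf (Node cu :: cv)) with (true :: enc (Node cu) ++ false :: encf cv); by rewrite enc_Node.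
Qed.

Lemma count_LTn p (P : ptree -> bool) n : (forall t, P t = leaves_ok p 0 t) ->
  count_trees P n (sz p 0 n).
Proof.
move=> HP; exists (LTn p 0 n); split; first exact/NoDup_uniq/LT_uniq.
split=> // t; rewrite In_mem LTn_mem HP; split.
  by case/andP=> /eqP.
by case=> -> ->; rewrite eqxx.
Qed.

Lemma F_tree_E t : F_tree t = leaves_ok odd 0 t.
Proof.
rewrite /F_tree; case: t => [[|c cs]] //=.
by have := nodes_gt0 c; case: (nodes c) => // k _; rewrite addSn.
Qed.

Lemma enc_retakh n t : t \in LTn retakh_level 0 n.+1 ->
  (size (enc t) == n.*2) && retakh_path (enc t).
Proof.
rewrite LTn_mem; case: t => ts /andP[/eqP nt lt].
rewrite enc_Node size_encf /retakh_path /dyck.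
have := dyck_encf ts 0 [::]; have := peaks_encf retakh_level ts 0 [::]; rewrite !cats0 => -> ->.
rewrite /= andbT; apply/andP; split; first by move: nt => /= [->].
by case: ts lt {nt}.
Qed.

Lemma retakh_enc n s : (size s == n.*2) && retakh_path s ->
  s \in [seq enc t | t <- LTn retakh_level 0 n.+1].
Proof.
case/andP=> /eqP ss /andP[ds ps].
have [ts es] := dyck_surj (leqnn _) ds.
apply/mapP; exists (Node ts); last by rewrite enc_Node.
rewrite LTn_mem; apply/andP; split.
  move: ss; rewrite es size_encf /= => ss; apply/eqP; congr S; lia.
move: ps; have := peaks_encf retakh_level ts 0 [::]; rewrite es cats0 => -> /andP[al _].
by case: ts {es} al.
Qed.

Lemma paths_count n : num_retakh_paths n = motzkin n.
Proof.
rewrite -rs_eq /rs /sz /num_retakh_paths cardE.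
have enc_inj : injective enc by move=> [a] [b]; rewrite !enc_Node => /encf_inj ->.
rewrite -(size_map val) -(size_map enc); apply: perm_size; apply: uniq_perm.
- rewrite map_inj_uniq; [exact: enum_uniq | exact: val_inj].
- rewrite map_inj_uniq //; exact: LT_uniq.
move=> s; apply/idP/idP.
  case/mapP=> t; rewrite mem_enum inE => rt ->.
  by apply: retakh_enc; rewrite size_tuple eqxx.
case/mapP=> t tL ->; case/andP: (enc_retakh tL) => /eqP se re.
apply/mapP; exists (Tuple (introT eqP se)) => //.
by rewrite mem_enum inE.
Qed.

Theorem mainTheorem1 :
  (forall n : nat, num_retakh_paths n = motzkin n) /\
  count_trees retakh_tree 0 0 /\
  (forall n : nat, count_trees retakh_tree n.+1 (motzkin n)) /\
  (exists f g : nat -> nat,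
     (forall n, count_trees F_tree n (f n)) /\
     (forall n, count_trees G_tree n (g n)) /\
     (forall n, f n = (if n is m.+1 then g m else 0)
                      + \sum_(k < n.+1) f k * g (n - k)) /\
     (forall n, g n = (n == 1) + \sum_(k < n.+1) f k * g (n - k)) /\
     (forall n, f n = if n is m.+2 then motzkin m else 0)).
Proof.
split; first exact: paths_count.
split; first by exists [::]; split; [constructor | split => // t /=; have := nodes_gt0 t; lia].
split; first by move=> n; rewrite -rs_eq; exact: count_LTn.
exists fs, gs; split; first by move=> n; apply: count_LTn => t; rewrite F_tree_E.
split; first by move=> n; exact: count_LTn.
split; first exact: F1.
split; first exact: G1.
exact: fs_eq.
Qed.
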